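(* Let $M$ be a compact pointed metric space and assume that $\mathrm{lip}_0(M)$ is $1$-norming for $\mathcal F(M)$, so that $\mathcal F(M)$ is isometrically the dual of $\mathrm{lip}_0(M)$. Then $\mathcal F(M)$ is weak$^*$-asymptotically uniformly convex (with respect to the weak$^*$ topology $\sigma(\mathcal F(M),\mathrm{lip}_0(M))$).
   Context: A pointed metric space $M$ has a distinguished origin $0$. $\mathrm{Lip}_0(M)$ is the Banach space of real Lipschitz functions on $M$ vanishing at $0$ with the best Lipschitz constant as norm; $\delta(x)$ is evaluation at $x$, and the Lipschitz free space $\mathcal F(M)$ is the closed linear span of $\delta(M)$ in $\mathrm{Lip}_0(M)^*$. $\mathrm{lip}_0(M)=\{f\in\mathrm{Lip}_0(M): \lim_{\varepsilon\to0}\sup_{0<d(x,y)<\varepsilon}|f(x)-f(y)|/d(x,y)=0\}$; it is $1$-norming if $\|\mu\|=\sup\{\langle f,\mu\rangle: f\in\mathrm{lip}_0(M),\|f\|_L\le1\}$ for every $\mu\in\mathcal F(M)$. For a dual space $X^*$ of a separable Banach space $X$, the modulus of weak$^*$-asymptotic uniform convexity is $\overline\delta^*_{X^*}(t)=\inf_{x^*\in S_{X^*}}\inf\{\liminf_n\|x^*+x_n^*\|-1: (x_n^* )\subset X^*\ \text{weak}^*\text{-null},\ \|x_n^*\|\ge t\}$, and $X^*$ is weak$^*$-asymptotically uniformly convex if $\overline\delta^*_{X^*}(t)>0$ for every $t>0$. *)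

(* Defs.v *)
From HB Require Import structures.
From mathcomp Require Import all_boot all_order all_algebra.
From mathcomp Require Import all_classical all_reals all_analysis.
Set Implicit Arguments. Unset Strict Implicit. Unset Printing Implicit Defensive.
Import Order.TTheory GRing.Theory Num.Theory.
Import numFieldNormedType.Exports.
Local Open Scope classical_set_scope.
Local Open Scope ring_scope.

Section Defs.
Context {R : realType} {T : Type}.
Variables (d : T -> T -> R) (x0 : T).

Definition is_metric : Prop :=
  [/\ (forall x y, 0 <= d x y), (forall x y, d x y = 0 <-> x = y),
      (forall x y, d x y = d y x) & (forall x y z, d x z <= d x y + d y z)].

Definition mopen (U : set T) : Prop :=
  forall x, U x -> exists2 r, 0 < r & forall y, d x y < r -> U y.

Definition metric_compact : Prop :=
  forall (I : Type) (U : I -> set T), (forall i, mopen (U i)) ->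
    (forall x, exists i, U i x) ->
    exists (n : nat) (g : 'I_n -> I), forall x, exists j, U (g j) x.

Definition is_lip (f : T -> R) : Prop :=
  exists L : R, forall x y, `|f x - f y| <= L * d x y.

Definition Lip0 (f : T -> R) : Prop := is_lip f /\ f x0 = 0.

Definition lipn (f : T -> R) : R :=
  sup [set z | exists x y, x <> y /\ z = `|f x - f y| / d x y].

Definition lip0 (f : T -> R) : Prop :=
  Lip0 f /\ forall e : R, 0 < e -> exists2 del : R, 0 < del &
    forall x y, 0 < d x y -> d x y < del -> `|f x - f y| <= e * d x y.

(* elements of Lip_0(M)^* are represented as functionals on T -> R,
   only their values on Lip_0(M) matter *)
Definition dual_elem (mu : (T -> R) -> R) : Prop :=
  (forall (a : R) f g, Lip0 f -> Lip0 g ->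
     mu (fun x => a * f x + g x) = a * mu f + mu g) /\
  exists C : R, forall f, Lip0 f -> `|mu f| <= C * lipn f.

Definition dnorm (mu : (T -> R) -> R) : R :=
  sup [set z | exists f, [/\ Lip0 f, lipn f <= 1 & z = mu f]].

(* F(M): closed linear span of delta(M) in Lip_0(M)^* *)
Definition free_elem (mu : (T -> R) -> R) : Prop :=
  dual_elem mu /\ forall e : R, 0 < e ->
    exists (n : nat) (a : 'I_n -> R) (x : 'I_n -> T),
      dnorm (fun f => mu f - \sum_(i < n) a i * f (x i)) <= e.

Definition lip0_one_norming : Prop :=
  forall mu, free_elem mu ->
    dnorm mu = sup [set z | exists f, [/\ lip0 f, lipn f <= 1 & z = mu f]].

Definition wstar_null (m : nat -> (T -> R) -> R) : Prop :=
  (forall n, free_elem (m n)) /\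
  forall f, lip0 f -> (fun n => m n f) @ \oo --> (0 : R).

Definition wAUC_modulus (t : R) : \bar R :=
  ereal_inf [set ereal_inf
      [set (limn_einf (fun n => (dnorm (fun f => mu f + m n f))%:E) - 1%:E)%E
        | m in [set m | wstar_null m /\ forall n, t <= dnorm (m n)]]
    | mu in [set mu | free_elem mu /\ dnorm mu = 1]].

Definition wstar_AUC : Prop := forall t : R, 0 < t -> (0 < wAUC_modulus t)%E.

End Defs.

(* Main.v *)
Require Import Defs.
From HB Require Import structures.
From mathcomp Require Import all_boot all_order all_algebra.
From mathcomp Require Import all_classical all_reals all_analysis.
From mathcomp Require Import ring lra.
Set Implicit Arguments. Unset Strict Implicit. Unset Printing Implicit Defensive.
Import Order.TTheory GRing.Theory Num.Theory.
Import numFieldNormedType.Exports.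
Local Open Scope classical_set_scope.
Local Open Scope ring_scope.

Lemma dxx {R : realType} {T : Type} (d : T -> T -> R) (hd : is_metric d) x :
  d x x = 0.
Proof. by case: hd => _ dE _ _; apply/dE. Qed.

Lemma dpos {R : realType} {T : Type} (d : T -> T -> R) (hd : is_metric d) x y :
  x <> y -> 0 < d x y.
Proof.
case: hd => d0 dE _ _ nxy; rewrite lt_neqAle d0 andbT eq_sym.
by apply/eqP => /dE.
Qed.

Lemma lip_le {R : realType} {T : Type} (d : T -> T -> R) (hd : is_metric d)
  (f : T -> R) : is_lip d f -> forall x y, `|f x - f y| <= lipn d f * d x y.
Proof.
move=> [L hL] x y; case: (pselect (x = y)) => [->|nxy].
  by rewrite subrr normr0 dxx // mulr0.
have dp := dpos hd nxy.
have ub : has_ubound [set z | exists x y, x <> y /\ z = `|f x - f y| / d x y].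
  exists L => _ [a [b [nab ->]]].
  by rewrite ler_pdivrMr ?(dpos hd nab) // hL.
have := ub_le_sup ub (ex_intro _ x (ex_intro _ y (conj nxy erefl))).
by rewrite -/(lipn d f) ler_pdivrMr.
Qed.

Lemma lipn_le {R : realType} {T : Type} (d : T -> T -> R) (hd : is_metric d)
  (f : T -> R) (L : R) : 0 <= L -> (forall x y, `|f x - f y| <= L * d x y) ->
  lipn d f <= L.
Proof.
move=> L0 hL; rewrite /lipn.
case: (pselect ([set z | exists x y, x <> y /\ z = `|f x - f y| / d x y] !=set0)) => [ne|e].
  apply: ge_sup => // _ [a [b [nab ->]]].
  by rewrite ler_pdivrMr ?(dpos hd nab) // hL.
have -> : [set z | exists x y, x <> y /\ z = `|f x - f y| / d x y] = set0.
  by apply/seteqP; split => // z hz; exfalso; apply: e; exists z.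
by rewrite sup0.
Qed.

Lemma lipn_ge0 {R : realType} {T : Type} (d : T -> T -> R) (hd : is_metric d)
  (f : T -> R) : is_lip d f -> 0 <= lipn d f.
Proof.
move=> [L hL]; rewrite /lipn.
case: (pselect ([set z | exists x y, x <> y /\ z = `|f x - f y| / d x y] !=set0)) => [[z [a [b [nab _]]]]|e].
  apply: le_trans (ub_le_sup _ (ex_intro _ a (ex_intro _ b (conj nab erefl)))).
    by rewrite divr_ge0 // ltW // (dpos hd nab).
  exists L => _ [a' [b' [nab' ->]]].
  by rewrite ler_pdivrMr ?(dpos hd nab') // hL.
have -> : [set z | exists x y, x <> y /\ z = `|f x - f y| / d x y] = set0.
  by apply/seteqP; split => // z hz; exfalso; apply: e; exists z.
by rewrite sup0.
Qed.

Lemma Lip0_comb {R : realType} {T : Type} (d : T -> T -> R) x0 (hd : is_metric d)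
  (f g : T -> R) (a : R) : Lip0 d x0 f -> Lip0 d x0 g ->
  Lip0 d x0 (fun x => a * f x + g x).
Proof.
case: hd => d0 _ _ _.
move=> [[Lf hf] f0] [[Lg hg] g0]; split; last by rewrite f0 g0 mulr0 addr0.
exists (`|a| * Lf + Lg) => x y.
have -> : a * f x + g x - (a * f y + g y) = a * (f x - f y) + (g x - g y) by ring.
apply: le_trans (ler_normD _ _) _.
rewrite mulrDl -mulrA normrM lerD //.
by apply: ler_wpM2l => //; apply: hf.
Qed.

Lemma Lip0_0 {R : realType} {T : Type} (d : T -> T -> R) x0 (hd : is_metric d) :
  Lip0 d x0 (fun _ => 0).
Proof.
case: hd => d0 _ _ _.
by split => //; exists 0 => x y; rewrite subrr normr0 mul0r.
Qed.

Lemma lip0_0 {R : realType} {T : Type} (d : T -> T -> R) x0 (hd : is_metric d) :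
  lip0 d x0 (fun _ => 0).
Proof.
split; first exact: Lip0_0.
case: hd => d0 _ _ _.
move=> e e0; exists 1 => // x y _ _; rewrite subrr normr0 mulr_ge0 // ltW //.
Qed.

Lemma Lip0_scale {R : realType} {T : Type} (d : T -> T -> R) x0 (hd : is_metric d)
  (f : T -> R) (a : R) : Lip0 d x0 f -> Lip0 d x0 (fun x => a * f x).
Proof.
move=> hf; have := Lip0_comb hd a hf (Lip0_0 x0 hd).
by under eq_fun do rewrite addr0.
Qed.

Lemma lipn0 {R : realType} {T : Type} (d : T -> T -> R) (hd : is_metric d) :
  lipn d (fun _ : T => (0 : R)) <= 1.
Proof.
have h : lipn d (fun _ : T => (0 : R)) <= 0.
  by apply: lipn_le => // x y; rewrite subrr normr0 mul0r.
by apply: le_trans h _.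
Qed.

Lemma mu0 {R : realType} {T : Type} (d : T -> T -> R) x0 (hd : is_metric d)
  (mu : (T -> R) -> R) : dual_elem d x0 mu -> mu (fun _ => 0) = 0.
Proof.
case=> lin _; have := lin 1 _ _ (Lip0_0 x0 hd) (Lip0_0 x0 hd).
rewrite (_ : (fun x => 1 * 0 + 0) = fun _ => 0); last first.
  by apply: funext => x; rewrite mul1r addr0.
move=> h; lra.
Qed.

Lemma muZ {R : realType} {T : Type} (d : T -> T -> R) x0 (hd : is_metric d)
  (mu : (T -> R) -> R) (f : T -> R) (a : R) : dual_elem d x0 mu -> Lip0 d x0 f ->
  mu (fun x => a * f x) = a * mu f.
Proof.
move=> hmu hf; have := hmu.1 a _ _ hf (Lip0_0 x0 hd).
rewrite (mu0 hd hmu) addr0.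
by under eq_fun do rewrite addr0.
Qed.

Lemma dual_bnd {R : realType} {T : Type} (d : T -> T -> R) x0 (hd : is_metric d)
  (mu : (T -> R) -> R) : dual_elem d x0 mu ->
  exists C, forall f, Lip0 d x0 f -> lipn d f <= 1 -> `|mu f| <= C.
Proof.
case=> _ [C hC]; exists `|C| => f hf hl.
have l0 := lipn_ge0 hd hf.1.
apply: le_trans (hC f hf) _.
have := ler_norm C; have := normr_ge0 C; nra.
Qed.

Lemma dnorm_ge {R : realType} {T : Type} (d : T -> T -> R) x0
  (mu : (T -> R) -> R) (h : T -> R) :
  (exists C, forall f, Lip0 d x0 f -> lipn d f <= 1 -> mu f <= C) ->
  Lip0 d x0 h -> lipn d h <= 1 -> mu h <= dnorm d x0 mu.
Proof.
move=> [C hC] hh hl; apply: ub_le_sup; last by exists h.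
by exists C => _ [f [hf hfl ->]]; apply: hC.
Qed.

Lemma norming_pick {R : realType} {T : Type} (d : T -> T -> R) x0 (hd : is_metric d)
  (mu : (T -> R) -> R) (e : R) : lip0_one_norming d x0 -> free_elem d x0 mu ->
  0 < e -> exists f, [/\ lip0 d x0 f, lipn d f <= 1 & dnorm d x0 mu - e < mu f].
Proof.
move=> hn hmu e0; rewrite (hn _ hmu).
have [C hC] := dual_bnd hd hmu.1.
have hs : has_sup [set z | exists f, [/\ lip0 d x0 f, lipn d f <= 1 & z = mu f]].
  split; first by exists (mu (fun _ => 0)), (fun _ => 0); split => //;
    [exact: lip0_0 | exact: lipn0].
  exists C => _ [f [hf hfl ->]].
  by apply: le_trans (ler_norm _) _; apply: hC => //; exact: hf.1.
have [_ [f [hf hfl ->]] hlt] := sup_adherent e0 hs.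
by exists f.
Qed.

Lemma limn_einf_ge {R : realType} (u : (\bar R)^nat) (c : \bar R) (N : nat) :
  (forall n, (N <= n)%N -> (c <= u n)%E) -> (c <= limn_einf u)%E.
Proof.
move=> hu; rewrite limn_einf_lim; apply: lime_ge; first exact: is_cvg_einfs.
exists N => // n /= Nn.
apply: le_ereal_inf_tmp => _ [k /= nk <-]; apply: hu.
exact: leq_trans Nn nk.
Qed.

Lemma net {R : realType} {T : Type} (d : T -> T -> R) (hd : is_metric d)
  (hc : metric_compact d) (eta : R) : 0 < eta ->
  exists (p : nat) (ys : 'I_p -> T), forall x, exists j, d (ys j) x < eta.
Proof.
move=> eta0.
have [] := hc T (fun y => [set x | d y x < eta]).
- move=> y x /= hx; exists (eta - d y x); first by rewrite subr_gt0.
  move=> z hz; case: hd => _ _ _ tri.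
  by apply: le_lt_trans (tri y x z) _; rewrite -ltrBrDl.
- by move=> x; exists x => /=; rewrite dxx.
by move=> p [ys hys]; exists p, ys.
Qed.

Lemma pat_close {R : realType} (D eta a b : R) : 0 < eta -> `|a| <= D -> `|b| <= D ->
  (inord (Num.truncn ((a + D)/eta)) : 'I_(Num.truncn (2*D/eta)).+1)
   = inord (Num.truncn ((b + D)/eta)) -> `|a - b| < eta.
Proof.
move=> eta0 ha hb heq.
move: ha hb; rewrite !ler_norml => /andP[ha1 ha2] /andP[hb1 hb2].
have va0 : 0 <= (a + D)/eta by apply: divr_ge0; [lra | exact: ltW].
have vb0 : 0 <= (b + D)/eta by apply: divr_ge0; [lra | exact: ltW].
have vaK : (Num.truncn ((a + D)/eta) < (Num.truncn (2*D/eta)).+1)%N.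
  by rewrite ltnS le_truncn // ler_pM2r ?invr_gt0 //; lra.
have vbK : (Num.truncn ((b + D)/eta) < (Num.truncn (2*D/eta)).+1)%N.
  by rewrite ltnS le_truncn // ler_pM2r ?invr_gt0 //; lra.
have := congr1 (@nat_of_ord _) heq; rewrite !inordK // => ht.
have /andP[a1 a2] := truncn_itv va0.
have /andP[b1 b2] := truncn_itv vb0.
rewrite ht in a1 a2.
have -> : a - b = eta * ((a + D)/eta - (b + D)/eta).
  by field; rewrite gt_eqF.
rewrite normrM gtr0_norm // gtr_pMr //.
rewrite ltr_norml; move: a1 a2 b1 b2; rewrite -natr1.
set u := (_ + _)/eta; set v := (_ + _)/eta; set w := _%:R.
move=> *; apply/andP; split; lra.
Qed.

Lemma muL3 {R : realType} {T : Type} (d : T -> T -> R) x0 (hd : is_metric d)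
  (mu : (T -> R) -> R) (f g q : T -> R) (a b c : R) : dual_elem d x0 mu ->
  Lip0 d x0 f -> Lip0 d x0 g -> Lip0 d x0 q ->
  mu (fun x => a * f x + (b * g x + c * q x)) = a * mu f + (b * mu g + c * mu q).
Proof.
move=> hmu hf hg hq.
have Lq := Lip0_scale hd c hq.
have LG := Lip0_comb hd b hg Lq.
have -> : mu (fun x => a * f x + (b * g x + c * q x)) =
  a * mu f + mu (fun x => b * g x + c * q x) := hmu.1 a f _ hf LG.
have -> : mu (fun x => b * g x + c * q x) = b * mu g + mu (fun x => c * q x)
  := hmu.1 b g _ hg Lq.
by rewrite (muZ hd c hmu hq).
Qed.

Lemma lip1_le {R : realType} {T : Type} (d : T -> T -> R) x0 (hd : is_metric d)
  (g : T -> R) : Lip0 d x0 g -> lipn d g <= 1 -> forall x y, `|g x - g y| <= d x y.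
Proof.
move=> hg hl x y; apply: le_trans (lip_le hd hg.1 x y) _.
case: hd => d0 _ _ _; by rewrite ler_piMl.
Qed.

Lemma nu_bnd {R : realType} {T : Type} (n : nat) (a : 'I_n -> R) (xs : 'I_n -> T)
  (q : T -> R) (s : R) : (forall x, `|q x| <= s) ->
  `|\sum_(i < n) a i * q (xs i)| <= (\sum_(i < n) `|a i|) * s.
Proof.
move=> hq; apply: le_trans (ler_norm_sum _ _ _) _.
rewrite mulr_suml; apply: ler_sum => i _.
by rewrite normrM ler_wpM2l.
Qed.

Lemma cvg_N {R : realType} (u : nat -> R) (e : R) : 0 < e -> u @ \oo --> (0:R) ->
  exists N, forall n, (N <= n)%N -> `|u n| < e.
Proof.
move=> e0 h.
have h2 := @cvgr_dist_lt _ _ _ \oo _ _ _ h _ e0.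
case: h2 => N _ hN; exists N => n Nn.
by have := hN n Nn; rewrite /= sub0r normrN.
Qed.

Lemma core {R : realType} {T : Type} (d : T -> T -> R) x0 (hd : is_metric d)
  (hc : metric_compact d) (hn : lip0_one_norming d x0)
  (mu : (T -> R) -> R) (m : nat -> (T -> R) -> R) (t : R) :
  0 < t -> free_elem d x0 mu -> dnorm d x0 mu = 1 -> wstar_null d x0 m ->
  (forall n, t <= dnorm d x0 (m n)) ->
  exists N, forall n, (N <= n)%N -> 1 + t / 4 <= dnorm d x0 (fun f => mu f + m n f).
Proof.
move=> t0 hmu mu1 hm mt.
have hd' := hd; case: hd' => d0 dE dsym dtri.
pose e := t / (48 + 2 * t).
have e0 : 0 < e by rewrite divr_gt0 //; lra.
have he : e * (48 + 2 * t) = t by rewrite /e mulfVK //; apply/eqP; lra.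
clearbody e.
have [f [lf fl muf]] := norming_pick hd hn hmu e0.
rewrite mu1 in muf.
have [del del0 hdel] := lf.2 e e0.
have [n0 [a [xs hnu]]] := hmu.2 e e0.
pose A := \sum_(i < n0) `|a i|.
have A0 : 0 <= A by apply: sumr_ge0 => i _.
have hA : A = \sum_(i < n0) `|a i| by [].
clearbody A.
pose s := Num.min (e / (A + 1)) (e * del).
have s0 : 0 < s.
  rewrite lt_min; apply/andP; split; last exact: mulr_gt0.
  apply: divr_gt0 => //; lra.
have h1 : s <= e / (A + 1) by rewrite ge_min lexx.
have sdel : s <= e * del by rewrite ge_min lexx orbT.
clearbody s.
have sA : A * s <= e.
  have A1 : 0 < A + 1 by lra.
  have h2 : (A + 1) * s <= e by rewrite mulrC -ler_pdivlMr.
  lra.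
pose eta := s / 3.
have eta0 : 0 < eta by rewrite divr_gt0.
have s3 : s = 3 * eta by rewrite /eta mulrC mulfVK.
clearbody eta.
have [p [ys hys]] := net hd hc eta0.
pose D := \sum_(j < p) d (ys j) x0.
have hD : forall g, Lip0 d x0 g -> lipn d g <= 1 -> forall j, `|g (ys j)| <= D.
  move=> g hg hl j; have := lip1_le hd hg hl (ys j) x0; rewrite hg.2 subr0 => h.
  apply: le_trans h _; rewrite /D (bigD1 j) //= lerDl sumr_ge0 //.
clearbody D.
pose K := Num.truncn (2 * D / eta).
pose pat (g : T -> R) : {ffun 'I_p -> 'I_K.+1} :=
  [ffun j => inord (Num.truncn ((g (ys j) + D) / eta))].
pose B g := lip0 d x0 g /\ lipn d g <= 1.
pose rep (P : {ffun 'I_p -> 'I_K.+1}) : T -> R :=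
  match pselect (exists g, B g /\ pat g = P) with
  | left h => proj1_sig (cid h) | right _ => fun _ => 0 end.
have hrep : forall P, B (rep P) /\ ((exists g, B g /\ pat g = P) -> pat (rep P) = P).
  move=> P; rewrite /rep; case: pselect => [h|h].
    by case: (cid h) => g [] /=.
  split; last by move=> /h.
  by split; [exact: lip0_0 | exact: lipn0].
have hNP : forall P, exists N, forall n, (N <= n)%N -> `|m n (rep P)| < e.
  by move=> P; apply: cvg_N e0 (hm.2 _ (hrep P).1.1).
have [Nf hNf] := cvg_N e0 (hm.2 _ lf).
pose NP P := proj1_sig (cid (hNP P)).
have hNP' : forall P n, (NP P <= n)%N -> `|m n (rep P)| < e.
  by move=> P; exact: (proj2_sig (cid (hNP P))).
exists (maxn Nf (\max_P NP P)) => n; rewrite geq_max => /andP[Nn1 Nn2].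
have hmf := hNf n Nn1.
have hP : forall P, `|m n (rep P)| < e.
  by move=> P; apply: hNP'; apply: leq_trans Nn2; exact: (leq_bigmax P).
have [g [lg gl mng]] := norming_pick hd hn (hm.1 n) e0.
have mng' : t - e < m n g by have := mt n; lra.
have [[lphi phil] hpat] := hrep (pat g).
have pphi := hpat (ex_intro _ g (conj (conj lg gl) erefl)).
have hPg := hP (pat g).
move: lphi phil pphi hPg; set phi := rep (pat g) => lphi phil pphi hPg.
have close : forall x, `|g x - phi x| <= s.
  move=> x; have [j hj] := hys x.
  have k1 := lip1_le hd lg.1 gl x (ys j).
  have k2 := lip1_le hd lphi.1 phil (ys j) x.
  have k3 : `|g (ys j) - phi (ys j)| < eta.
    apply: pat_close eta0 (hD _ lg.1 gl j) (hD _ lphi.1 phil j) _.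
    by have := congr1 (fun F : {ffun 'I_p -> 'I_K.+1} => F j) pphi; rewrite /pat !ffunE => ->.
  rewrite dsym in k1.
  move: k1 k2 k3; rewrite !ler_norml ltr_norml => /andP[h11 h12] /andP[h21 h22] /andP[h31 h32].
  apply/andP; split; lra.
pose c := (1 + e)^-1.
have c0 : 0 < c by rewrite invr_gt0; lra.
have hc1 : c * (1 + e) = 1 by rewrite mulVf //; apply/eqP; lra.
clearbody c.
have key : forall x y, `|(f x - f y) + ((g x - phi x) - (g y - phi y)) / 2| <= (1 + e) * d x y.
  move=> x y; case: (pselect (x = y)) => [->|nxy].
    by rewrite dxx // mulr0 (_ : _ + _ = 0) ?normr0 //; ring.
  have dp := dpos hd nxy.
  have kg := lip1_le hd lg.1 gl x y.
  have kp := lip1_le hd lphi.1 phil x y.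
  have kf := lip1_le hd lf.1 fl x y.
  have cx := close x; have cy := close y.
  case: (ltP (d x y) del) => hxy.
    have kf' := hdel x y dp hxy.
    move: kg kp kf' cx cy; rewrite !ler_norml => /andP[? ?] /andP[? ?] /andP[? ?] /andP[? ?] /andP[? ?].
    apply/andP; split; lra.
  have hs : s <= e * d x y by apply: le_trans sdel _; rewrite ler_wpM2l // ltW.
  move: kf cx cy; rewrite !ler_norml => /andP[? ?] /andP[? ?] /andP[? ?].
  apply/andP; split; lra.
pose h := fun x => c * f x + (c / 2 * g x + (- (c / 2)) * phi x).
have Lh : Lip0 d x0 h.
  have LL := Lip0_comb hd c lf.1 (Lip0_comb hd (c / 2) lg.1 (Lip0_scale hd (- (c / 2)) lphi.1)).
  exact LL.
have hl : lipn d h <= 1.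
  apply: (lipn_le hd ler01) => x y.
  have -> : h x - h y = c * ((f x - f y) + ((g x - phi x) - (g y - phi y)) / 2).
    by rewrite /h; ring.
  rewrite normrM gtr0_norm // mul1r.
  apply: le_trans (ler_wpM2l (ltW c0) (key x y)) _.
  by rewrite mulrA hc1 mul1r.
pose mk := fun x => 0 * f x + (- (2^-1) * g x + 2^-1 * phi x).
have Lmk : Lip0 d x0 mk.
  have LL := Lip0_comb hd 0 lf.1 (Lip0_comb hd (- (2^-1)) lg.1 (Lip0_scale hd (2^-1) lphi.1)).
  exact LL.
have lmk : lipn d mk <= 1.
  apply: (lipn_le hd ler01) => x y.
  have kg := lip1_le hd lg.1 gl x y.
  have kp := lip1_le hd lphi.1 phil x y.
  have -> : mk x - mk y = - (2^-1) * (g x - g y) + 2^-1 * (phi x - phi y).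
    by rewrite /mk; ring.
  move: kg kp; rewrite !ler_norml => /andP[? ?] /andP[? ?].
  apply/andP; split; lra.
pose nu := fun q : T -> R => \sum_(i < n0) a i * q (xs i).
have bnd1 : exists C, forall q, Lip0 d x0 q -> lipn d q <= 1 ->
    (fun q => mu q - \sum_(i < n0) a i * q (xs i)) q <= C.
  have [C1 hC1] := dual_bnd hd hmu.1.
  exists (C1 + \sum_(i < n0) `|a i| * d (xs i) x0) => q hq hql /=.
  have e1 := hC1 q hq hql.
  have e2 : `|\sum_(i < n0) a i * q (xs i)| <= \sum_(i < n0) `|a i| * d (xs i) x0.
    apply: le_trans (ler_norm_sum _ _ _) _; apply: ler_sum => i _.
    rewrite normrM ler_wpM2l //.
    by have := lip1_le hd hq hql (xs i) x0; rewrite hq.2 subr0.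
  move: e1 e2; rewrite !ler_norml => /andP[? ?] /andP[? ?]; lra.
have hmk := le_trans (dnorm_ge bnd1 Lmk lmk) hnu.
rewrite /= in hmk.
have hnumk : `|\sum_(i < n0) a i * mk (xs i)| <= A * (s / 2).
  rewrite hA; apply: nu_bnd => x.
  have -> : mk x = - (g x - phi x) / 2 by rewrite /mk; ring.
  rewrite normrM normrN [`|2^-1|]ger0_norm ?invr_ge0 //.
  have := close x; lra.
have Emk : mu mk = 0 * mu f + (- (2^-1) * mu g + 2^-1 * mu phi).
  exact: (muL3 hd 0 (- (2^-1)) (2^-1) hmu.1 lf.1 lg.1 lphi.1).
have Eh1 : mu h = c * mu f + (c / 2 * mu g + (- (c / 2)) * mu phi).
  exact: (muL3 hd c (c / 2) (- (c / 2)) hmu.1 lf.1 lg.1 lphi.1).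
have Eh2 : m n h = c * m n f + (c / 2 * m n g + (- (c / 2)) * m n phi).
  exact: (muL3 hd c (c / 2) (- (c / 2)) (hm.1 n).1 lf.1 lg.1 lphi.1).
have bnd2 : exists C, forall q, Lip0 d x0 q -> lipn d q <= 1 ->
    (fun q => mu q + m n q) q <= C.
  have [C1 hC1] := dual_bnd hd hmu.1.
  have [C2 hC2] := dual_bnd hd (hm.1 n).1.
  exists (C1 + C2) => q hq hql /=.
  have e1 := hC1 q hq hql; have e2 := hC2 q hq hql.
  move: e1 e2; rewrite !ler_norml => /andP[? ?] /andP[? ?]; lra.
have fin := dnorm_ge bnd2 Lh hl.
apply: le_trans fin; rewrite /= Eh1 Eh2.
set W := mu f + m n f + (mu g - mu phi) / 2 + (m n g - m n phi) / 2.
have -> : c * mu f + (c / 2 * mu g + - (c / 2) * mu phi) +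
  (c * m n f + (c / 2 * m n g + - (c / 2) * m n phi)) = c * W by rewrite /W; ring.
have hW : (1 + e) * (1 + t / 4) <= W.
  rewrite /W; move: hmf hPg hnumk; rewrite !ltr_norml ler_norml.
  move=> /andP[? ?] /andP[? ?] /andP[? ?].
  rewrite Emk in hmk.
  lra.
apply: le_trans (ler_wpM2l (ltW c0) hW).
by rewrite mulrA hc1 mul1r.
Qed.

Theorem proposition6p1 (R : realType) (T : Type) (d : T -> T -> R) (x0 : T)
  (hd : is_metric d) (hcpt : metric_compact d)
  (hnorm : lip0_one_norming d x0) :
  wstar_AUC d x0.
Proof.
move=> t t0.
apply: (@lt_le_trans _ _ (t / 4)%:E); first by rewrite lte_fin divr_gt0.
apply: le_ereal_inf_tmp => _ [mu [hmu mu1] <-].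
apply: le_ereal_inf_tmp => _ [m [hm mt] <-].
have [N hN] := core hd hcpt hnorm t0 hmu mu1 hm mt.
rewrite leeBrDr //.
apply: (limn_einf_ge (N := N)) => n Nn.
rewrite -EFinD lee_fin.
have := hN n Nn; lra.
Qed.
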